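(* If $G$ and $G'$ are two distinct acyclic subgraphs of $K_{n,d}$ with $LD(G)=LD(G')$ and $RD(G)=RD(G')$, then $G$ and $G'$ are not compatible.
   Context: Fix positive integers $n,d$. $K_{n,d}$ denotes the complete bipartite graph with left vertex set $[n]=\{1,\dots,n\}$ and right vertex set $[\bar d]=\{\bar 1,\dots,\bar d\}$; all graphs considered are subgraphs of $K_{n,d}$ (identified with their edge sets). For a subgraph $G$, $LD(G)\in\mathbb Z_{\ge0}^{[n]}$ is the vector of degrees of the left vertices and $RD(G)\in\mathbb Z_{\ge 0}^{[\bar d]}$ the vector of degrees of the right vertices. Two acyclic subgraphs $G,G'$ are called compatible if whenever both contain a perfect matching between the same pair of vertex sets $I\subseteq[n]$ and $\bar J\subseteq[\bar d]$, these two matchings are equal. *)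

(* Defs.v *)
From mathcomp Require Import all_boot.
Set Implicit Arguments. Unset Strict Implicit. Unset Printing Implicit Defensive.

(* Subgraphs of K_{n,d}: sets of edges (i, j) with i a left vertex in 'I_n
   (standing for [n]) and j a right vertex in 'I_d (standing for [\bar d]). *)
Definition graph (n d : nat) := {set 'I_n * 'I_d}.

Definition LD n d (G : graph n d) : 'I_n -> nat :=
  fun i => #|[set e in G | e.1 == i]|.
Definition RD n d (G : graph n d) : 'I_d -> nat :=
  fun j => #|[set e in G | e.2 == j]|.

(* A cycle of length 2k (k >= 2) in a bipartite graph: pairwise distinct left
   vertices l_0..l_{k-1} and pairwise distinct right vertices r_0..r_{k-1}
   with edges l_t -- r_t and l_{t+1 mod k} -- r_t. *)
Definition cyc_succ k (t : 'I_k) : 'I_k :=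
  Ordinal (ltn_pmod t.+1 (leq_ltn_trans (leq0n t) (ltn_ord t))).

Definition has_cycle n d (G : graph n d) : Prop :=
  exists k (l : 'I_k -> 'I_n) (r : 'I_k -> 'I_d),
    1 < k /\ injective l /\ injective r /\
    forall t : 'I_k,
      (l t, r t) \in G /\
      (l (cyc_succ t), r t) \in G.

Definition acyclic n d (G : graph n d) : Prop := ~ has_cycle G.

Definition perfect_matching n d (M : graph n d) (I : {set 'I_n}) (J : {set 'I_d}) :=
  [/\ forall e, e \in M -> (e.1 \in I) && (e.2 \in J),
      forall i, i \in I -> #|[set e in M | e.1 == i]| = 1
    & forall j, j \in J -> #|[set e in M | e.2 == j]| = 1].

Definition contains_pm n d (G M : graph n d) I J :=
  M \subset G /\ perfect_matching M I J.

Definition compatible n d (G G' : graph n d) : Prop :=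
  forall (I : {set 'I_n}) (J : {set 'I_d}) (M M' : graph n d),
    contains_pm G M I J -> contains_pm G' M' I J -> M = M'.

(* Main.v *)
Require Import Defs.
From mathcomp Require Import all_boot.
Set Implicit Arguments. Unset Strict Implicit. Unset Printing Implicit Defensive.

Lemma stable_set (T : finType) (f : T -> T) (L0 : {set T}) :
  L0 != set0 -> f @: L0 \subset L0 ->
  exists I : {set T}, [/\ I \subset L0, I != set0 & f @: I = I].
Proof.
move=> nL fL.
have ex : exists k, [exists A : {set T},
   [&& A \subset L0, A != set0, f @: A \subset A & #|A| == k]].
  by exists #|L0|; apply/existsP; exists L0; rewrite subxx nL fL eqxx.
case: (ex_minnP ex) => k /existsP [A /and4P [sA nA fA /eqP cA]] minA.
exists A; split => //; apply/eqP; rewrite eqEcard fA /= cA; apply: minA => /=.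
apply/existsP; exists (f @: A) => /=.
by rewrite (subset_trans fA sA) imset_eq0 nA imsetS ?eqxx.
Qed.

Lemma bal (T : finType) (G G' : {set T}) (p : pred T) :
  #|[set e in G | p e]| = #|[set e in G' | p e]| ->
  (exists2 e, e \in G :\: G' & p e) -> exists2 e, e \in G' :\: G & p e.
Proof.
move=> h [e eR pe].
have h1 := cardsID G' [set e in G | p e].
have h2 := cardsID G [set e in G' | p e].
have eqI : [set e in G | p e] :&: G' = [set e in G' | p e] :&: G.
  by apply/setP=> x; rewrite !inE; case: (x \in G); case: (x \in G'); case: (p x).
have pos : 0 < #|[set e in G | p e] :\: G'|.
  apply/card_gt0P; exists e; move: eR; rewrite !inE => /andP [-> ->].
  by rewrite pe.
have : 0 < #|[set e in G' | p e] :\: G|.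
  move: h1 h2 pos; rewrite h eqI => <- /eqP; rewrite eqn_add2l => /eqP ->.
  done.
case/card_gt0P => x; rewrite !inE => /andP [xG /andP [xG' px]].
by exists x; rewrite ?inE ?xG ?xG'.
Qed.

Lemma key n d (G G' : graph n d) (pr : 'I_n -> 'I_d) (pb : 'I_d -> 'I_n)
  (L0 : {set 'I_n}) :
 L0 != set0 ->
 (forall i, i \in L0 -> (i, pr i) \in G) ->
 (forall i, i \in L0 -> (i, pr i) \notin G') ->
 (forall i, i \in L0 -> (pb (pr i), pr i) \in G') ->
 (forall i, i \in L0 -> pb (pr i) \in L0) ->
 ~ compatible G G'.
Proof.
move=> nL hG hG' hB hL comp.
pose f := fun i => pb (pr i).
have fL : f @: L0 \subset L0.
  by apply/subsetP=> _ /imsetP [x xL ->]; exact: hL.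
have [I [sI nI fI]] := stable_set nL fL.
have injf : {in I &, injective f} by apply/imset_injP; rewrite fI.
have injpr : {in I &, injective pr}.
  by move=> a b aI bI e; apply: injf => //; rewrite /f e.
pose J := pr @: I.
pose M := [set (x, pr x) | x in I].
pose M' := [set (f x, pr x) | x in I].
have cM : contains_pm G M I J.
  split.
    apply/subsetP => _ /imsetP [x xI ->]; apply: hG; exact: (subsetP sI).
  split.
  - move=> _ /imsetP [x xI ->] /=; rewrite xI /=; apply/imsetP; by exists x.
  - move=> i iI.
    rewrite (_ : [set e in M | e.1 == i] = [set (i, pr i)]) ?cards1 //.
    apply/setP => e; rewrite !inE; apply/andP/eqP.
      by case=> /imsetP [x xI ->] /= /eqP ->.
    move=> ->; split => //=; apply/imsetP; by exists i.
  - move=> j /imsetP [x0 x0I ->].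
    rewrite (_ : [set e in M | e.2 == pr x0] = [set (x0, pr x0)]) ?cards1 //.
    apply/setP => e; rewrite !inE; apply/andP/eqP.
      by case=> /imsetP [x xI ->] /= /eqP ee; rewrite (injpr _ _ xI x0I ee).
    move=> ->; split => //=; apply/imsetP; by exists x0.
have cM' : contains_pm G' M' I J.
  split.
    apply/subsetP => _ /imsetP [x xI ->]; apply: hB; exact: (subsetP sI).
  split.
  - move=> _ /imsetP [x xI ->] /=; rewrite -{1}fI.
    by apply/andP; split; apply/imsetP; exists x.
  - move=> i; rewrite -{1}fI => /imsetP [x0 x0I ->].
    rewrite (_ : [set e in M' | e.1 == f x0] = [set (f x0, pr x0)]) ?cards1 //.
    apply/setP => e; rewrite !inE; apply/andP/eqP.
      by case=> /imsetP [x xI ->] /= /eqP ee; rewrite (injf _ _ xI x0I ee).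
    move=> ->; split => //=; apply/imsetP; by exists x0.
  - move=> j /imsetP [x0 x0I ->].
    rewrite (_ : [set e in M' | e.2 == pr x0] = [set (f x0, pr x0)]) ?cards1 //.
    apply/setP => e; rewrite !inE; apply/andP/eqP.
      by case=> /imsetP [x xI ->] /= /eqP ee; rewrite (injpr _ _ xI x0I ee).
    move=> ->; split => //=; apply/imsetP; by exists x0.
have eM := comp I J M M' cM cM'.
case/set0Pn: nI => x xI.
have : (x, pr x) \in M' by rewrite -eM; apply/imsetP; exists x.
case: cM' => /subsetP sM' _ /sM'.
by rewrite (negbTE (hG' _ (subsetP sI _ xI))).
Qed.

Lemma main_aux (n d : nat) (G G' : graph n d) (e0 : 'I_n * 'I_d) :
  e0 \in G -> e0 \notin G' ->
  LD G =1 LD G' -> RD G =1 RD G' ->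
  ~ compatible G G'.
Proof.
move=> e0G e0G' hL hR.
pose pr i := odflt e0.2 [pick j | ((i,j) \in G) && ((i,j) \notin G')].
pose pb j := odflt e0.1 [pick i | ((i,j) \in G') && ((i,j) \notin G)].
pose L0 := [set i | [exists j, ((i,j) \in G) && ((i,j) \notin G')]].
have hpr : forall i, i \in L0 -> ((i, pr i) \in G) && ((i, pr i) \notin G').
  move=> i; rewrite inE => /existsP [j hj]; rewrite /pr.
  case: pickP => [j' -> //|/(_ j)]; by rewrite hj.
have hpb : forall i, i \in L0 -> ((pb (pr i), pr i) \in G') && ((pb (pr i), pr i) \notin G).
  move=> i iL; have /andP [h1 h2] := hpr i iL.
  have hx : exists2 e, e \in G :\: G' & (fun e => e.2 == pr i) e.
    by exists (i, pr i); rewrite ?inE ?h1 ?h2.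
  have [e eB /eqP pe] := @bal _ G G' (fun e => e.2 == pr i) (hR (pr i)) hx.
  rewrite /pb; case: pickP => [i' -> //|/(_ e.1)].
  by move: eB; rewrite inE -pe -surjective_pairing => /andP [-> ->].
apply: (@key n d G G' pr pb L0).
- by apply/set0Pn; exists e0.1; rewrite inE; apply/existsP; exists e0.2;
    rewrite -surjective_pairing e0G e0G'.
- by move=> i /hpr /andP [].
- by move=> i /hpr /andP [].
- by move=> i /hpb /andP [].
- move=> i iL; have /andP [h1 h2] := hpb i iL.
  have hx : exists2 e, e \in G' :\: G & (fun e => e.1 == pb (pr i)) e.
    by exists (pb (pr i), pr i); rewrite ?inE ?h1 ?h2.
  have [e eB /eqP pe] := @bal _ G' G (fun e => e.1 == pb (pr i)) (esym (hL (pb (pr i)))) hx.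
  rewrite inE; apply/existsP; exists e.2.
  by move: eB; rewrite inE -pe -surjective_pairing => /andP [-> ->].
Qed.

Theorem mainTheorem2 (n d : nat) (G G' : graph n d) :
  acyclic G -> acyclic G' -> G != G' ->
  LD G =1 LD G' -> RD G =1 RD G' ->
  ~ compatible G G'.
Proof.
move=> _ _ neq hL hR.
have [/existsP [e /andP [eG eG']]|h1] := boolP [exists e, (e \in G) && (e \notin G')].
  exact: (main_aux eG eG').
have [/existsP [e /andP [eG' eG]]|h2] := boolP [exists e, (e \in G') && (e \notin G)].
  move=> comp; apply: (main_aux eG' eG (fun i => esym (hL i)) (fun j => esym (hR j))).
  by move=> I J M M' c1 c2; rewrite (comp I J M' M c2 c1).
case/negP: neq; apply/eqP/setP => e.
move/existsPn: h1 => /(_ e); move/existsPn: h2 => /(_ e).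
by case: (e \in G); case: (e \in G').
Qed.
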